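(* Let $(M,d)$ be a metric space, $\mathsf{P}\subseteq M$ a set of $n$ points, $1\le\ell\le k\le n$ integers with $m=\lfloor k/\ell\rfloor\ge 2$. Let $Q=\{q_1,\dots,q_m\}$ be the output of Gonzalez's algorithm on $\mathsf{P}$ with $m$ centers, and let $r_m=d(q_m,\{q_1,\dots,q_{m-1}\})$. Let $C\subseteq\mathsf{P}$ with $|C|=k$ and $C\supseteq\bigcup_{i=1}^m N_{\mathsf{P}}(q_i,\ell)$, let $r_{\mathrm{alg}}=\max_{p\in\mathsf{P}} d_C(p,\ell)$ and $r_{\mathrm{opt}}=\min_{C'\subseteq\mathsf{P},|C'|=k}\max_{p\in\mathsf{P}} d_{C'}(p,\ell)$. Then $r_{\mathrm{alg}}\le r_m+r_{\mathrm{opt}}$.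
   Context: Gonzalez's algorithm with $m$ centers: $q_1\in\mathsf{P}$ is arbitrary, and for $i=2,\dots,m$, $q_i$ is a point of $\mathsf{P}$ maximizing $d(p,\{q_1,\dots,q_{i-1}\})$ over $p\in\mathsf{P}$ (distance to a set = distance to its nearest element). For a finite $S\subseteq M$ and $1\le i\le|S|$, $d_S(p,i)$ is the radius of the smallest closed ball centered at $p$ containing at least $i$ points of $S$; nearest neighbors are ordered lexicographically by $(d(p,s),\text{index of }s)$ and $N_S(p,i)$ is the set of the first $i$ points of $S$ in this order. *)

(* Defs.v *)
From HB Require Import structures.
From mathcomp Require Import all_boot all_order all_algebra.
Set Implicit Arguments. Unset Strict Implicit. Unset Printing Implicit Defensive.
Import Order.TTheory GRing.Theory Num.Theory.
Local Open Scope ring_scope.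

(* Points of P are indexed by 'I_n; D i j is the distance between the
   i-th and the j-th point of P. *)

(* minimum of a sequence (x0 if the sequence is empty; only used on nonempty ones) *)
Definition seqmin (R : realFieldType) (x0 : R) (s : seq R) : R :=
  foldr Num.min (head x0 s) s.

Definition distset (R : realFieldType) (n : nat) (D : 'I_n -> 'I_n -> R)
  (p : 'I_n) (s : seq 'I_n) : R :=
  seqmin 0 [seq D p x | x <- s].

Definition ball_card (R : realFieldType) (n : nat) (D : 'I_n -> 'I_n -> R)
  (p : 'I_n) (S : {set 'I_n}) (r : R) : nat :=
  #|[set s in S | D p s <= r]|.

(* d_S(p,i): radius of the smallest closed ball centered at p containing at
   least i points of S (the minimum is attained at one of the distances
   d(p,s), s in S). *)
Definition dS (R : realFieldType) (n : nat) (D : 'I_n -> 'I_n -> R)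
  (p : 'I_n) (S : {set 'I_n}) (i : nat) : R :=
  seqmin 0 [seq r <- [seq D p s | s <- enum S] | (i <= ball_card D p S r)%N].

Definition lex_lt (R : realFieldType) (n : nat) (D : 'I_n -> 'I_n -> R)
  (p t s : 'I_n) : bool :=
  (D p t < D p s) || ((D p t == D p s) && (t < s)%N).

(* N_P(p,i): the first i points of P in the above order *)
Definition NN (R : realFieldType) (n : nat) (D : 'I_n -> 'I_n -> R)
  (p : 'I_n) (i : nat) : {set 'I_n} :=
  [set s : 'I_n | (#|[set t : 'I_n | lex_lt D p t s]| < i)%N].

(* the first i Gonzalez centers q_0, ..., q_{i-1} (0-based) *)
Definition gprefix (n : nat) (q : nat -> 'I_n) (i : nat) : seq 'I_n :=
  [seq q j | j <- iota 0 i].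

(* q_0..q_{m-1} is a valid run of Gonzalez's algorithm with m centers
   (q_0 arbitrary, arbitrary tie-breaking) *)
Definition gonzalez (R : realFieldType) (n : nat) (D : 'I_n -> 'I_n -> R)
  (m : nat) (q : nat -> 'I_n) : Prop :=
  forall i : nat, (0 < i)%N -> (i < m)%N ->
    forall p : 'I_n, distset D p (gprefix q i) <= distset D (q i) (gprefix q i).

(* Main.v *)
Require Import Defs.
From HB Require Import structures.
From mathcomp Require Import all_boot all_order all_algebra.
Import Order.TTheory GRing.Theory Num.Theory.
Local Open Scope ring_scope.

Lemma foldr_min_le (R : realFieldType) (h x : R) (s : seq R) :
  x \in s -> foldr Num.min h s <= x.
Proof.
elim: s => [//|a s IH] /=; rewrite inE => /orP [/eqP ->|/IH H].
  by rewrite ge_min lexx.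
by rewrite ge_min H orbT.
Qed.

Lemma foldr_min_mem (R : realFieldType) (h : R) (s : seq R) :
  foldr Num.min h s \in h :: s.
Proof.
elim: s => [|a s IH] /=; first by rewrite inE.
rewrite /Num.min; case: ifP => _; first by rewrite !inE eqxx orbT.
move: IH; rewrite !inE => /orP [->|->] //; by rewrite !orbT.
Qed.

Lemma foldr_min_ge (R : realFieldType) (c h : R) (s : seq R) :
  (forall x, x \in s -> c <= x) -> c <= h -> c <= foldr Num.min h s.
Proof.
elim: s => [//|a s IH] /= Hs Hh.
rewrite le_min Hs ?inE ?eqxx //=; apply: IH => // x Hx; by apply: Hs; rewrite inE Hx orbT.
Qed.

Lemma seqmin_ge (R : realFieldType) (c x0 : R) (s : seq R) :
  (forall x, x \in s -> c <= x) -> c <= x0 -> c <= seqmin x0 s.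
Proof.
move=> Hs H0; apply: foldr_min_ge => //.
case: s Hs => [//|a s] Hs /=; apply: Hs; by rewrite inE eqxx.
Qed.

Lemma seqmin_le (R : realFieldType) (x0 x : R) s : x \in s -> seqmin x0 s <= x.
Proof. exact: foldr_min_le. Qed.

Lemma seqmin_mem (R : realFieldType) (x0 : R) s : s != [::] -> seqmin x0 s \in s.
Proof.
case: s => [//|a s] _; rewrite /seqmin.
have := @foldr_min_mem _ (head x0 (a :: s)) (a :: s).
by rewrite inE /= => /orP [/eqP ->|//]; rewrite inE eqxx.
Qed.

Lemma exists_max (T : finType) (R : realFieldType) (A : {set T}) (f : T -> R) :
  A != set0 -> exists2 s, s \in A & forall t, t \in A -> f t <= f s.
Proof.
case/set0Pn => s0 Hs0.
case: (arg_maxP f Hs0) => s Hs Hmax.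
by exists s.
Qed.

Arguments exists_max {T R A} f.

Lemma dS_le (R : realFieldType) n (D : 'I_n -> 'I_n -> R) (p : 'I_n) (S : {set 'I_n}) (l : nat) (s : 'I_n) :
  s \in S -> (l <= ball_card D p S (D p s))%N -> dS D p S l <= D p s.
Proof.
move=> Hs Hb; apply: seqmin_le.
by rewrite mem_filter Hb /=; apply: map_f; rewrite mem_enum.
Qed.

Arguments dS_le {R n D p S l s}.

Lemma dS_spec (R : realFieldType) n (D : 'I_n -> 'I_n -> R) (p : 'I_n) (S : {set 'I_n}) (l : nat) (s : 'I_n) :
  s \in S -> (l <= ball_card D p S (D p s))%N ->
  (l <= ball_card D p S (dS D p S l))%N.
Proof.
move=> Hs Hb.
have Hm : D p s \in [seq r <- [seq D p s | s <- enum S] | (l <= ball_card D p S r)%N].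
  by rewrite mem_filter Hb /=; apply: map_f; rewrite mem_enum.
have Hne : [seq r <- [seq D p s | s <- enum S] | (l <= ball_card D p S r)%N] != [::].
  by apply/eqP => E; rewrite E in Hm.
by have := @seqmin_mem _ 0 _ Hne; rewrite mem_filter => /andP [].
Qed.

Arguments dS_spec {R n D p S l s}.

Section Lex.
Variables (R : realFieldType) (n : nat) (D : 'I_n -> 'I_n -> R) (p : 'I_n).

Lemma lex_irr s : lex_lt D p s s = false.
Proof. by rewrite /lex_lt ltxx ltnn andbF. Qed.

Lemma lex_trans a b c : lex_lt D p a b -> lex_lt D p b c -> lex_lt D p a c.
Proof.
rewrite /lex_lt => /orP [H1|/andP [/eqP E1 H1]] /orP [H2|/andP [/eqP E2 H2]].
- by rewrite (lt_trans H1 H2).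
- by rewrite -E2 H1.
- by rewrite E1 H2.
- by rewrite E1 E2 eqxx (ltn_trans H1 H2) orbT.
Qed.

Lemma lex_total a b : a != b -> lex_lt D p a b || lex_lt D p b a.
Proof.
move=> Hab; rewrite /lex_lt.
case: (ltgtP (D p a) (D p b)) => //= E.
case: (ltngtP a b) => // /val_inj E'; by rewrite E' eqxx in Hab.
Qed.

Definition rank (s : 'I_n) := #|[set t | lex_lt D p t s]|.

Lemma rank_lt s : (rank s < n)%N.
Proof.
rewrite /rank.
suff H : [set t | lex_lt D p t s] \proper [set: 'I_n].
  by have := proper_card H; rewrite cardsT card_ord.
rewrite properT; apply/negP => /eqP E.
have : s \in [set t | lex_lt D p t s] by rewrite E inE.
by rewrite inE lex_irr.
Qed.

Lemma rank_ltlt a b : lex_lt D p a b -> (rank a < rank b)%N.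
Proof.
move=> H; apply: proper_card; apply/properP; split.
  by apply/subsetP => t; rewrite !inE => Ht; exact: (lex_trans _ _ _ Ht H).
by exists a; rewrite !inE ?H ?lex_irr.
Qed.

Lemma rank_inj : injective rank.
Proof.
move=> a b E; apply/eqP; apply/negPn/negP => Hab.
case/orP: (lex_total _ _ Hab) => /rank_ltlt; by rewrite E ltnn.
Qed.

Lemma NN_card l : (l <= n)%N -> (l <= #|NN D p l|)%N.
Proof.
move=> hln.
pose f (s : 'I_n) : 'I_n := Ordinal (rank_lt s).
have finj : injective f by move=> a b /(congr1 val) /= /rank_inj.
case: (injF_bij finj) => g fg gf.
have Hcard : #|[set i : 'I_n | (i < l)%N]| = l.
  have -> : [set i : 'I_n | (i < l)%N] = widen_ord hln @: [set: 'I_l].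
    apply/setP => i; rewrite inE; apply/idP/imsetP.
      by move=> Hi; exists (Ordinal Hi) => //; apply: val_inj.
    by case=> j _ ->; exact: ltn_ord j.
  rewrite card_imset ?cardsT ?card_ord //.
  by move=> a b /(congr1 val) /= /val_inj.
rewrite -{1}Hcard; apply: leq_trans (leq_imset_card f _).
apply: subset_leq_card; apply/subsetP => i; rewrite inE => Hi.
apply/imsetP; exists (g i); last exact/esym/gf.
have E : rank (g i) = i := congr1 val (gf i).
by move: E; rewrite /NN inE /rank => ->.
Qed.

End Lex.

Theorem mainTheorem9 (R : realFieldType) (M : Type) (d : M -> M -> R)
  (d_ge0 : forall x y, 0 <= d x y)
  (d_eq0 : forall x y, d x y = 0 <-> x = y)
  (d_sym : forall x y, d x y = d y x)
  (d_tri : forall x y z, d x z <= d x y + d y z)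
  (n : nat) (pts : 'I_n -> M) (pts_inj : injective pts)
  (l k : nat) (hl : (1 <= l)%N) (hlk : (l <= k)%N) (hkn : (k <= n)%N)
  (hm : (2 <= k %/ l)%N)
  (q : nat -> 'I_n)
  (hq : gonzalez (fun i j => d (pts i) (pts j)) (k %/ l) q)
  (C : {set 'I_n}) (hC : #|C| = k)
  (hNC : forall j : nat, (j < k %/ l)%N ->
           NN (fun i j => d (pts i) (pts j)) (q j) l \subset C) :
  let D := fun i j : 'I_n => d (pts i) (pts j) in
  let r_m := distset D (q (k %/ l).-1) (gprefix q (k %/ l).-1) in
  let r_alg := \big[Num.max/0]_(p < n) dS D p C l in
  forall C' : {set 'I_n}, #|C'| = k ->
    r_alg <= r_m + \big[Num.max/0]_(p < n) dS D p C' l.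
Proof.
move=> D r_m r_alg C' hC'.
set ro := \big[Num.max/0]_(p < n) dS D p C' l.
set m := (k %/ l)%N.
have hm1 : (0 < m.-1)%N by rewrite -ltnS prednK //; apply: leq_trans hm.
have hm2 : (m.-1 < m)%N by rewrite prednK //; apply: leq_trans hm.
have near : forall p, exists2 j, (j < m)%N & D p (q j) <= r_m.
  move=> p.
  have Hle := hq _ hm1 hm2 p.
  have Hne : [seq D p x | x <- gprefix q m.-1] != [::].
    by rewrite /gprefix; case: (m.-1) hm1.
  have := @seqmin_mem _ 0 _ Hne.
  rewrite -/(distset D p _) => /mapP [x /mapP [j]].
  rewrite mem_iota add0n => /andP [_ Hj] -> E.
  exists j; first exact: ltn_trans Hj hm2.
  by rewrite -E.
have ro_ge : forall p, dS D p C' l <= ro.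
  by move=> p; apply: (le_bigmax 0 (fun p => dS D p C' l) p).
have ro0 : 0 <= ro.
  apply: le_trans (ro_ge (q 0%N)).
  apply: seqmin_ge => // x.
  by rewrite mem_filter => /andP [_ /mapP [y _ ->]]; apply: d_ge0.
have Nbound : forall c s, s \in NN D c l -> D c s <= ro.
  move=> c s; rewrite inE => Hs.
  apply: le_trans (ro_ge c).
  rewrite leNgt; apply/negP => Hlt.
  have C'ne : C' != set0 by rewrite -card_gt0 hC'; apply: leq_trans hlk.
  case: (exists_max (fun t => D c t) C'ne) => s0 Hs0 Hmax.
  have Hb0 : (l <= ball_card D c C' (D c s0))%N.
    rewrite /ball_card.
    have -> : [set s in C' | D c s <= D c s0] = C'.
      by apply/setP => t; rewrite inE; case: (boolP (t \in C')) => //= /Hmax ->.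
    by rewrite hC'.
  have Hl := dS_spec Hs0 Hb0.
  have Hsub : (ball_card D c C' (dS D c C' l) <= #|[set t | lex_lt D c t s]|)%N.
    apply: subset_leq_card; apply/subsetP => t; rewrite !inE => /andP [_ Ht].
    by rewrite /lex_lt (le_lt_trans Ht Hlt).
  by have := leq_ltn_trans (leq_trans Hl Hsub) Hs; rewrite ltnn.
have Hpos : forall p, 0 <= D p p by move=> p; apply: d_ge0.
have rm0 : 0 <= r_m.
  have Hne : [seq D (q m.-1) x | x <- gprefix q m.-1] != [::].
    by rewrite /gprefix; case: (m.-1) hm1.
  have := @seqmin_mem _ 0 _ Hne.
  rewrite -/(distset D _ _) -/r_m => /mapP [x _ ->]; apply: d_ge0.
rewrite /r_alg; apply: bigmax_le => [|p _]; first by rewrite addr_ge0.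
case: (near p) => j Hj Hpj.
have hln : (l <= n)%N by apply: leq_trans hkn.
have Nne : NN D (q j) l != set0.
  by rewrite -card_gt0; apply: leq_trans hl (@NN_card _ _ D (q j) l hln).
case: (exists_max (fun t => D p t) Nne) => s Hs Hmax.
have HsC : s \in C by apply: (subsetP (hNC j Hj)).
apply: le_trans (dS_le HsC _) _.
  apply: leq_trans (@NN_card _ _ D (q j) l hln) _.
  apply: subset_leq_card; apply/subsetP => t Ht.
  by rewrite inE (subsetP (hNC j Hj)) // Hmax.
apply: le_trans (d_tri _ (pts (q j)) _) _.
apply: lerD => //.
exact: Nbound.
Qed.
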